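(* Let $\alpha,\lambda>0$ and $\beta_1,\beta_2,\beta_3>0$. Let $W_1,W_2,W_3$ be independent continuous random variables with $P(W_i\le w)=(1-e^{-\lambda w^{\alpha}})^{\beta_i}$ for $w>0$, and let $(Z_1,Z_2)=(\max\{W_1,W_3\},\max\{W_2,W_3\})$ (the bivariate continuous exponentiated Weibull distribution with parameters $\alpha,\lambda,\beta_1,\beta_2,\beta_3$). Set $X_i=[Z_i]$, $i=1,2$, where $[z]$ is the largest integer $\le z$, and $p=e^{-\lambda}$. Then $(X_1,X_2)\sim BDEW(\alpha,p,\beta_1,\beta_2,\beta_3)$.
   Context: The exponentiated discrete Weibull distribution $EDW(\alpha,p,\beta)$ ($\alpha,\beta>0$, $0<p<1$) is the distribution on $\mathbb{N}_0=\{0,1,2,\dots\}$ with cumulative distribution function $F_{EDW}(x;\alpha,p,\beta)=[1-p^{([x]+1)^{\alpha}}]^{\beta}$ for real $x\ge 0$. The bivariate discrete exponentiated Weibull distribution $BDEW(\alpha,p,\beta_1,\beta_2,\beta_3)$ is the distribution of $(\max\{V_1,V_3\},\max\{V_2,V_3\})$ where $V_1,V_2,V_3$ are independent with $V_i\sim EDW(\alpha,p,\beta_i)$; equivalently it has joint CDF $F(x_1,x_2)=[1-p^{(x_1+1)^{\alpha}}]^{\beta_1}[1-p^{(x_2+1)^{\alpha}}]^{\beta_2}[1-p^{(\min\{x_1,x_2\}+1)^{\alpha}}]^{\beta_3}$ for $x_1,x_2\in\mathbb{N}_0$. *)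

(* Defs.v *)
From HB Require Import structures.
From mathcomp Require Import all_boot all_order all_algebra.
From mathcomp Require Import all_classical all_reals all_analysis.
Set Implicit Arguments. Unset Strict Implicit. Unset Printing Implicit Defensive.
Import Order.TTheory GRing.Theory Num.Theory.
Local Open Scope classical_set_scope.
Local Open Scope ring_scope.

(* Mutual independence of three real random variables: the product rule for
   all triples of Borel sets (taking some sets to be setT covers subfamilies). *)
Definition indep3 {d} {T : measurableType d} {R : realType}
  (P : probability T R) (X1 X2 X3 : {RV P >-> R}) : Prop :=
  forall A1 A2 A3 : set R, measurable A1 -> measurable A2 -> measurable A3 ->
    P (X1 @^-1` A1 `&` X2 @^-1` A2 `&` X3 @^-1` A3) =
    (P (X1 @^-1` A1) * P (X2 @^-1` A2) * P (X3 @^-1` A3))%E.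

Definition EW_cdf {R : realType} (alpha lambda beta w : R) : R :=
  (1 - expR (- (lambda * w `^ alpha))) `^ beta.

Definition BDEW_cdf {R : realType} (alpha p b1 b2 b3 : R) (x1 x2 : nat) : R :=
  (1 - p `^ ((x1.+1)%:R `^ alpha)) `^ b1 *
  (1 - p `^ ((x2.+1)%:R `^ alpha)) `^ b2 *
  (1 - p `^ ((minn x1 x2).+1%:R `^ alpha)) `^ b3.
Arguments indep3 {d T R} P X1 X2 X3.

(* Main.v *)
Require Import Defs.
From HB Require Import structures.
From mathcomp Require Import all_boot all_order all_algebra.
From mathcomp Require Import all_classical all_reals all_analysis.
From mathcomp Require Import lra.
Import Order.TTheory GRing.Theory Num.Theory.
Local Open Scope classical_set_scope.
Local Open Scope ring_scope.

Section H.
Context (d : measure_display) (T : measurableType d) (R : realType)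
  (P : probability T R).

Lemma lt_set (X : {RV P >-> R}) (a : R) :
  [set t | X t < a] = X @^-1` [set` `]-oo, a[%R].
Proof. by apply/seteqP; split=> t /=; rewrite in_itv /=. Qed.

Lemma mlt (X : {RV P >-> R}) (a : R) : measurable [set t | X t < a].
Proof. rewrite lt_set; exact: measurable_funPTI (measurable_itv _). Qed.

Lemma mge (X : {RV P >-> R}) (a : R) : measurable [set t | a <= X t].
Proof.
have -> : [set t | a <= X t] = X @^-1` [set` `[a, +oo[%R].
  by apply/seteqP; split=> t /=; rewrite in_itv /= andbT.
exact: measurable_funPTI (measurable_itv _).
Qed.

Lemma P_lt (X : {RV P >-> R}) (a v : R) :
  P (X @^-1` [set a]) = 0%E -> P [set t | X t <= a] = v%:E ->
  P [set t | X t < a] = v%:E.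
Proof.
move=> h0 hle; rewrite -hle.
have -> : [set t | X t <= a] = [set t | X t < a] `|` X @^-1` [set a].
  apply/seteqP; split=> t /=; rewrite le_eqVlt.
    by case/orP=> [/eqP ->|]; [right|left].
  by case=> [->|->]; rewrite ?eqxx ?orbT.
rewrite measureU0 //; first exact: mlt.
Qed.

End H.

Lemma floor_le_nat (R : realType) (y : R) (n : nat) :
  (Num.floor y <= n%:Z) = (y < n.+1%:R).
Proof.
have -> : (Num.floor y <= n%:Z) = (Num.floor y < n.+1%:Z).
  by rewrite -addn1 PoszD ltzD1.
by rewrite floor_lt_int.
Qed.

Lemma EW_p (R : realType) (alpha lambda b : R) (n : nat) :
  EW_cdf alpha lambda b n.+1%:R =
  (1 - expR (- lambda) `^ (n.+1%:R `^ alpha)) `^ b.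
Proof. by rewrite /EW_cdf -expRM mulNr. Qed.

Lemma EW_small (R : realType) (alpha lambda b e : R) :
  0 < alpha -> 0 < lambda -> 0 < b -> 0 < e ->
  exists w, 0 < w /\ EW_cdf alpha lambda b w <= e.
Proof.
move=> a0 l0 b0 e0.
set del := e `^ b^-1.
have d0 : 0 < del by apply: powR_gt0.
exists ((del / lambda) `^ alpha^-1); split.
  by apply: powR_gt0; apply: divr_gt0.
rewrite /EW_cdf -powRrM mulVf ?gt_eqF // powRr1; last by apply/ltW/divr_gt0.
rewrite mulrC divfK ?gt_eqF //.
have -> : e = del `^ b by rewrite /del -powRrM mulVf ?gt_eqF // powRr1 // ltW.
apply: ge0_ler_powR; first exact: ltW.
- by rewrite nnegrE subr_ge0 expR_le1 oppr_le0 ltW.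
- by rewrite nnegrE ltW.
- by rewrite lerBlDr -lerBlDl; apply: expR_ge1Dx.
Qed.

Lemma P_neg0 d (T : measurableType d) (R : realType) (P : probability T R)
  (X : {RV P >-> R}) (alpha lambda b : R) :
  0 < alpha -> 0 < lambda -> 0 < b ->
  (forall w : R, 0 < w -> P [set t | X t <= w] = (EW_cdf alpha lambda b w)%:E) ->
  P [set t | X t < 0] = 0%E.
Proof.
move=> a0 l0 b0 hF.
have mA := @mlt _ _ _ P X 0.
have fA : P [set t | X t < 0] \is a fin_num by apply: fin_num_measure.
rewrite -(fineK fA); congr EFin.
set r := fine _.
have r0 : 0 <= r by apply: fine_ge0; apply: measure_ge0.
have hr : forall e, 0 < e -> r <= e.
  move=> e e0; have [w [w0 hw]] := @EW_small R _ _ _ _ a0 l0 b0 e0.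
  rewrite -lee_fin /r (fineK fA).
  apply: (@le_trans _ _ (EW_cdf alpha lambda b w)%:E); last by rewrite lee_fin.
  rewrite -hF //; apply: le_measure; rewrite ?inE //.
  - exact: measurable_funPTI (measurable_itv `]-oo, w]).
  - by move=> t /= /ltW /le_trans; apply; apply: ltW.
apply/eqP; rewrite eq_le r0 andbT; apply/negP => /negP; rewrite -ltNge => rp.
have := hr (r / 2) (divr_gt0 rp (ltr0Sn _ 1)).
rewrite ler_pdivlMr //; lra.
Qed.

Theorem mainTheorem3 (d : measure_display) (T : measurableType d) (R : realType)
  (P : probability T R) (alpha lambda b1 b2 b3 : R)
  (W1 W2 W3 : {RV P >-> R}) :
  0 < alpha -> 0 < lambda -> 0 < b1 -> 0 < b2 -> 0 < b3 ->
  indep3 P W1 W2 W3 ->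
  (* continuity of W1, W2, W3 *)
  (forall w : R, P (W1 @^-1` [set w]) = 0%E) ->
  (forall w : R, P (W2 @^-1` [set w]) = 0%E) ->
  (forall w : R, P (W3 @^-1` [set w]) = 0%E) ->
  (forall w : R, 0 < w -> P [set t | W1 t <= w] = (EW_cdf alpha lambda b1 w)%:E) ->
  (forall w : R, 0 < w -> P [set t | W2 t <= w] = (EW_cdf alpha lambda b2 w)%:E) ->
  (forall w : R, 0 < w -> P [set t | W3 t <= w] = (EW_cdf alpha lambda b3 w)%:E) ->
  let Z1 := fun t => Num.max (W1 t) (W3 t) in
  let Z2 := fun t => Num.max (W2 t) (W3 t) in
  let X1 := fun t => Num.floor (Z1 t) in
  let X2 := fun t => Num.floor (Z2 t) in
  let p := expR (- lambda) in
  (* (X1, X2) is N0 x N0-valued almost surely ... *)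
  P [set t | (0 <= X1 t)%R /\ (0 <= X2 t)%R] = 1%E /\
  (* ... with the BDEW(alpha, p, b1, b2, b3) joint CDF *)
  (forall x1 x2 : nat,
     P [set t | (X1 t <= x1%:Z)%R /\ (X2 t <= x2%:Z)%R] =
     (BDEW_cdf alpha p b1 b2 b3 x1 x2)%:E).
Proof.
move=> a0 l0 b10 b20 b30 hind h1 h2 h3 F1 F2 F3 Z1 Z2 X1 X2 p.
split.
  have -> : [set t | 0 <= X1 t /\ 0 <= X2 t] =
    ([set t | 0 <= W1 t] `|` [set t | 0 <= W3 t]) `&`
    ([set t | 0 <= W2 t] `|` [set t | 0 <= W3 t]).
    apply/seteqP; split=> t /=; rewrite /X1 /X2 /Z1 /Z2 !floor_ge0 !le_max.
      by move=> [] /orP [] h /orP [] h'; split; by [left|right].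
    by move=> [] [] h [] h'; split; apply/orP; by [left|right].
  have mS : measurable (([set t | 0 <= W1 t] `|` [set t | 0 <= W3 t]) `&`
    ([set t | 0 <= W2 t] `|` [set t | 0 <= W3 t])).
    by apply: measurableI; apply: measurableU; apply: mge.
  apply/le_anti; rewrite probability_le1 //=.
  have hC : [set t | 0 <= W3 t] = ~` [set t | W3 t < 0].
    by apply/seteqP; split=> t /=; rewrite leNgt => /negP.
  have <- : P [set t | 0 <= W3 t] = 1%E.
    rewrite hC probability_setC ?(@P_neg0 _ _ _ P W3 _ _ _ a0 l0 b30 F3) ?sube0 //; exact: mlt.
  apply: le_measure; rewrite ?inE //; first exact: mge.
  by move=> t h; split; right.
move=> x1 x2.
have -> : [set t | X1 t <= x1%:Z /\ X2 t <= x2%:Z] =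
  [set t | W1 t < x1.+1%:R] `&` [set t | W2 t < x2.+1%:R] `&`
  [set t | W3 t < (minn x1 x2).+1%:R].
  apply/seteqP; split=> t /=; rewrite /X1 /X2 /Z1 /Z2 !floor_le_nat !gt_max.
    move=> [] /andP [] ha hb /andP [] hc hd; split => //.
    by case: (leqP x1 x2).
  move=> [] [] ha hc hb.
  case: (leqP x1 x2) hb => h hb.
    rewrite ha hb hc /=; split=> //.
    by apply: (lt_le_trans hb); rewrite ler_nat.
  rewrite ha hb hc /=; split=> //.
  by apply: (lt_le_trans hb); rewrite ler_nat ltnW.
rewrite !lt_set hind ?measurable_itv // -!lt_set.
rewrite (@P_lt _ _ _ P _ _ _ (h1 _) (F1 _ (ltr0Sn _ _))) (@P_lt _ _ _ P _ _ _ (h2 _) (F2 _ (ltr0Sn _ _))).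
rewrite (@P_lt _ _ _ P _ _ _ (h3 _) (F3 _ (ltr0Sn _ _))).
by rewrite /BDEW_cdf /p -!EW_p -!EFinM.
Qed.
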